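(* Let $B(u)$ be as below and $A(u)=q_1^2u+2q_1q_2$. With respect to the canonical bracket $\{q_i,p_j\}=\delta_{ij}$, $\{q_1,q_2\}=\{p_1,p_2\}=0$, $\{f,g\}=\sum_i(\partial_{q_i}f\,\partial_{p_i}g-\partial_{p_i}f\,\partial_{q_i}g)$, one has for all $u\neq v$ $$\{B(u),A(v)\}=\frac{B(u)-B(v)}{u-v},\qquad \{A(u),A(v)\}=0 .$$ Consequently, where the roots $u_1\neq u_2$ of $B$ are distinct, the functions $u_1,u_2,\ v_1=-A(u_1),\ v_2=-A(u_2)$ are canonical coordinates: $\{u_i,v_j\}=\delta_{ij}$, $\{u_1,u_2\}=\{v_1,v_2\}=0$.
   Context: $t_1,t_2$ are constants, $q_1\ne0$, and $$B(u)=u^2-\frac{p_2-2q_2}{2q_1}u+\frac{q_1^2}{6}-\frac{t_1}{2}-\frac{p_1}{2q_1}+\frac{p_2^2/4-q_2^2+t_2}{2q_1^2}.$$ *)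

(* Defs.v *)
From Stdlib Require Import Reals Lra.
From Coquelicot Require Import Coquelicot.
Open Scope R_scope.

(* Functions on phase space, arguments ordered (q1, q2, p1, p2). *)
Definition fn4 := R -> R -> R -> R -> R.

Definition Bfun (t1 t2 q1 q2 p1 p2 u : R) : R :=
  u^2 - (p2 - 2*q2)/(2*q1) * u + q1^2/6 - t1/2 - p1/(2*q1)
  + (p2^2/4 - q2^2 + t2)/(2*q1^2).

Definition Afun (q1 q2 p1 p2 u : R) : R := q1^2 * u + 2*q1*q2.

Definition d_q1 (f : fn4) q1 q2 p1 p2 := Derive (fun x => f x q2 p1 p2) q1.
Definition d_q2 (f : fn4) q1 q2 p1 p2 := Derive (fun x => f q1 x p1 p2) q2.
Definition d_p1 (f : fn4) q1 q2 p1 p2 := Derive (fun x => f q1 q2 x p2) p1.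
Definition d_p2 (f : fn4) q1 q2 p1 p2 := Derive (fun x => f q1 q2 p1 x) p2.

Definition pb (f g : fn4) q1 q2 p1 p2 : R :=
  (d_q1 f q1 q2 p1 p2 * d_p1 g q1 q2 p1 p2 - d_p1 f q1 q2 p1 p2 * d_q1 g q1 q2 p1 p2)
+ (d_q2 f q1 q2 p1 p2 * d_p2 g q1 q2 p1 p2 - d_p2 f q1 q2 p1 p2 * d_q2 g q1 q2 p1 p2).

(* B(u) = u^2 - b u + c ;  discriminant and the two roots *)
Definition bcoef (q1 q2 p1 p2 : R) : R := (p2 - 2*q2)/(2*q1).
Definition discB (t1 t2 q1 q2 p1 p2 : R) : R :=
  (bcoef q1 q2 p1 p2)^2 - 4 * Bfun t1 t2 q1 q2 p1 p2 0.
Definition rootU1 (t1 t2 : R) : fn4 := fun q1 q2 p1 p2 =>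
  (bcoef q1 q2 p1 p2 + sqrt (discB t1 t2 q1 q2 p1 p2)) / 2.
Definition rootU2 (t1 t2 : R) : fn4 := fun q1 q2 p1 p2 =>
  (bcoef q1 q2 p1 p2 - sqrt (discB t1 t2 q1 q2 p1 p2)) / 2.
Definition canV1 (t1 t2 : R) : fn4 := fun q1 q2 p1 p2 =>
  - Afun q1 q2 p1 p2 (rootU1 t1 t2 q1 q2 p1 p2).
Definition canV2 (t1 t2 : R) : fn4 := fun q1 q2 p1 p2 =>
  - Afun q1 q2 p1 p2 (rootU2 t1 t2 q1 q2 p1 p2).

(* Main.v *)
Require Import Defs.
From Stdlib Require Import Reals Lra.
From Coquelicot Require Import Coquelicot.
Open Scope R_scope.

Definition Sq t1 t2 q1 q2 p1 p2 := sqrt (discB t1 t2 q1 q2 p1 p2).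
Definition du t1 t2 q1 q2 p1 p2 (sg bx cx : R) :=
  (bx + sg * (2*bcoef q1 q2 p1 p2*bx - 4*cx)/(2*Sq t1 t2 q1 q2 p1 p2))/2.
Definition Kd t2 q2 p2 := p2^2/4 - q2^2 + t2.

Ltac side t1 t2 q1 q2 p1 p2 :=
  repeat split; try (match goal with |- 0 < ?e =>
     replace e with (discB t1 t2 q1 q2 p1 p2) by (unfold discB, bcoef, Bfun; field; auto); assumption end);
  try (apply Rmult_integral_contrapositive_currified; try lra; auto);
  try (apply Rmult_integral_contrapositive_currified; try lra; auto);
  try (apply Rmult_integral_contrapositive_currified; try lra; auto).

Ltac dtac t1 t2 q1 q2 p1 p2 :=
  intros; unfold du, Kd; unfold rootU1, rootU2, discB, bcoef, Bfun;
  auto_derive; [side t1 t2 q1 q2 p1 p2 |];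
  match goal with |- context [sqrt ?e] =>
    replace (sqrt e) with (Sq t1 t2 q1 q2 p1 p2) by
      (unfold Sq; f_equal; unfold discB, bcoef, Bfun; field; auto) end;
  assert (Sq t1 t2 q1 q2 p1 p2 <> 0) by (unfold Sq; apply Rgt_not_eq, sqrt_lt_R0; auto);
  unfold bcoef; field; auto.

Section S.
Variables (t1 t2 q1 q2 p1 p2 : R).
Hypothesis hq1 : q1 <> 0.
Hypothesis hD : 0 < discB t1 t2 q1 q2 p1 p2.

Definition bq1 := -(p2-2*q2)/(2*q1^2).
Definition cq1 := q1/3 + p1/(2*q1^2) - Kd t2 q2 p2/q1^3.

Lemma iu1q1 : is_derive (fun x => rootU1 t1 t2 x q2 p1 p2) q1
  (du t1 t2 q1 q2 p1 p2 1 bq1 cq1).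
Proof. unfold bq1, cq1; dtac t1 t2 q1 q2 p1 p2. Qed.
Lemma iu2q1 : is_derive (fun x => rootU2 t1 t2 x q2 p1 p2) q1
  (du t1 t2 q1 q2 p1 p2 (-1) bq1 cq1).
Proof. unfold bq1, cq1; dtac t1 t2 q1 q2 p1 p2. Qed.
Lemma iu1q2 : is_derive (fun x => rootU1 t1 t2 q1 x p1 p2) q2
  (du t1 t2 q1 q2 p1 p2 1 (-1/q1) (-q2/q1^2)).
Proof. dtac t1 t2 q1 q2 p1 p2. Qed.
Lemma iu2q2 : is_derive (fun x => rootU2 t1 t2 q1 x p1 p2) q2
  (du t1 t2 q1 q2 p1 p2 (-1) (-1/q1) (-q2/q1^2)).
Proof. dtac t1 t2 q1 q2 p1 p2. Qed.
Lemma iu1p1 : is_derive (fun x => rootU1 t1 t2 q1 q2 x p2) p1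
  (du t1 t2 q1 q2 p1 p2 1 0 (-1/(2*q1))).
Proof. dtac t1 t2 q1 q2 p1 p2. Qed.
Lemma iu2p1 : is_derive (fun x => rootU2 t1 t2 q1 q2 x p2) p1
  (du t1 t2 q1 q2 p1 p2 (-1) 0 (-1/(2*q1))).
Proof. dtac t1 t2 q1 q2 p1 p2. Qed.
Lemma iu1p2 : is_derive (fun x => rootU1 t1 t2 q1 q2 p1 x) p2
  (du t1 t2 q1 q2 p1 p2 1 (1/(2*q1)) (p2/(4*q1^2))).
Proof. dtac t1 t2 q1 q2 p1 p2. Qed.
Lemma iu2p2 : is_derive (fun x => rootU2 t1 t2 q1 q2 p1 x) p2
  (du t1 t2 q1 q2 p1 p2 (-1) (1/(2*q1)) (p2/(4*q1^2))).
Proof. dtac t1 t2 q1 q2 p1 p2. Qed.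

Ltac vtac L :=
  apply is_derive_unique; unfold canV1, canV2, Afun; auto_derive;
  [repeat split; eexists; apply L; auto
  | match goal with |- context [Derive ?f ?x] => rewrite (is_derive_unique f x _ L) end; ring].

Lemma v1q1 : d_q1 (canV1 t1 t2) q1 q2 p1 p2 =
  -(2*q1*rootU1 t1 t2 q1 q2 p1 p2 + q1^2 * du t1 t2 q1 q2 p1 p2 1 bq1 cq1 + 2*q2).
Proof. vtac iu1q1. Qed.
Lemma v2q1 : d_q1 (canV2 t1 t2) q1 q2 p1 p2 =
  -(2*q1*rootU2 t1 t2 q1 q2 p1 p2 + q1^2 * du t1 t2 q1 q2 p1 p2 (-1) bq1 cq1 + 2*q2).
Proof. vtac iu2q1. Qed.
Lemma v1q2 : d_q2 (canV1 t1 t2) q1 q2 p1 p2 =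
  -(q1^2 * du t1 t2 q1 q2 p1 p2 1 (-1/q1) (-q2/q1^2) + 2*q1).
Proof. vtac iu1q2. Qed.
Lemma v2q2 : d_q2 (canV2 t1 t2) q1 q2 p1 p2 =
  -(q1^2 * du t1 t2 q1 q2 p1 p2 (-1) (-1/q1) (-q2/q1^2) + 2*q1).
Proof. vtac iu2q2. Qed.
Lemma v1p1 : d_p1 (canV1 t1 t2) q1 q2 p1 p2 =
  -(q1^2 * du t1 t2 q1 q2 p1 p2 1 0 (-1/(2*q1))).
Proof. vtac iu1p1. Qed.
Lemma v2p1 : d_p1 (canV2 t1 t2) q1 q2 p1 p2 =
  -(q1^2 * du t1 t2 q1 q2 p1 p2 (-1) 0 (-1/(2*q1))).
Proof. vtac iu2p1. Qed.
Lemma v1p2 : d_p2 (canV1 t1 t2) q1 q2 p1 p2 =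
  -(q1^2 * du t1 t2 q1 q2 p1 p2 1 (1/(2*q1)) (p2/(4*q1^2))).
Proof. vtac iu1p2. Qed.
Lemma v2p2 : d_p2 (canV2 t1 t2) q1 q2 p1 p2 =
  -(q1^2 * du t1 t2 q1 q2 p1 p2 (-1) (1/(2*q1)) (p2/(4*q1^2))).
Proof. vtac iu2p2. Qed.

Lemma u1q1 : d_q1 (rootU1 t1 t2) q1 q2 p1 p2 = du t1 t2 q1 q2 p1 p2 1 bq1 cq1.
Proof. exact (is_derive_unique _ _ _ iu1q1). Qed.
Lemma u2q1 : d_q1 (rootU2 t1 t2) q1 q2 p1 p2 = du t1 t2 q1 q2 p1 p2 (-1) bq1 cq1.
Proof. exact (is_derive_unique _ _ _ iu2q1). Qed.
Lemma u1q2 : d_q2 (rootU1 t1 t2) q1 q2 p1 p2 = du t1 t2 q1 q2 p1 p2 1 (-1/q1) (-q2/q1^2).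
Proof. exact (is_derive_unique _ _ _ iu1q2). Qed.
Lemma u2q2 : d_q2 (rootU2 t1 t2) q1 q2 p1 p2 = du t1 t2 q1 q2 p1 p2 (-1) (-1/q1) (-q2/q1^2).
Proof. exact (is_derive_unique _ _ _ iu2q2). Qed.
Lemma u1p1 : d_p1 (rootU1 t1 t2) q1 q2 p1 p2 = du t1 t2 q1 q2 p1 p2 1 0 (-1/(2*q1)).
Proof. exact (is_derive_unique _ _ _ iu1p1). Qed.
Lemma u2p1 : d_p1 (rootU2 t1 t2) q1 q2 p1 p2 = du t1 t2 q1 q2 p1 p2 (-1) 0 (-1/(2*q1)).
Proof. exact (is_derive_unique _ _ _ iu2p1). Qed.
Lemma u1p2 : d_p2 (rootU1 t1 t2) q1 q2 p1 p2 = du t1 t2 q1 q2 p1 p2 1 (1/(2*q1)) (p2/(4*q1^2)).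
Proof. exact (is_derive_unique _ _ _ iu1p2). Qed.
Lemma u2p2 : d_p2 (rootU2 t1 t2) q1 q2 p1 p2 = du t1 t2 q1 q2 p1 p2 (-1) (1/(2*q1)) (p2/(4*q1^2)).
Proof. exact (is_derive_unique _ _ _ iu2p2). Qed.

Lemma part3 :
     pb (rootU1 t1 t2) (canV1 t1 t2) q1 q2 p1 p2 = 1 /\
     pb (rootU1 t1 t2) (canV2 t1 t2) q1 q2 p1 p2 = 0 /\
     pb (rootU2 t1 t2) (canV1 t1 t2) q1 q2 p1 p2 = 0 /\
     pb (rootU2 t1 t2) (canV2 t1 t2) q1 q2 p1 p2 = 1 /\
     pb (rootU1 t1 t2) (rootU2 t1 t2) q1 q2 p1 p2 = 0 /\
     pb (canV1 t1 t2) (canV2 t1 t2) q1 q2 p1 p2 = 0.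
Proof.
  unfold pb.
  rewrite v1q1, v2q1, v1q2, v2q2, v1p1, v2p1, v1p2, v2p2,
          u1q1, u2q1, u1q2, u2q2, u1p1, u2p1, u1p2, u2p2.
  unfold du, rootU1, rootU2, bq1, cq1, Kd. fold (Sq t1 t2 q1 q2 p1 p2).
  assert (hS : Sq t1 t2 q1 q2 p1 p2 * Sq t1 t2 q1 q2 p1 p2 = discB t1 t2 q1 q2 p1 p2)
    by (unfold Sq; apply sqrt_sqrt; lra).
  assert (hS0 : Sq t1 t2 q1 q2 p1 p2 <> 0) by (unfold Sq; apply Rgt_not_eq, sqrt_lt_R0; auto).
  set (S0 := Sq t1 t2 q1 q2 p1 p2) in *; clearbody S0.
  unfold discB, bcoef, Bfun in hS.
  assert (ht2 : t2 = 2*q1^2*(((p2 - 2*q2)/(2*q1))^2/4 - S0*S0/4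
                   - (q1^2/6 - t1/2 - p1/(2*q1))) - p2^2/4 + q2^2)
    by (rewrite hS; field; auto).
  clear hS hD. subst t2. unfold bcoef.
  repeat split; field; auto.
Qed.
End S.

Ltac dsolve :=
  repeat match goal with |- context [Derive ?f ?x] =>
    erewrite (is_derive_unique f x);
    [ | auto_derive; repeat first [reflexivity | split | apply Rmult_integral_contrapositive_currified | lra | assumption]]
  end.

Theorem mainTheorem8 (t1 t2 q1 q2 p1 p2 : R) (hq1 : q1 <> 0) :
  (forall u v : R, u <> v ->
     pb (fun a b c d => Bfun t1 t2 a b c d u) (fun a b c d => Afun a b c d v)
        q1 q2 p1 p2
     = (Bfun t1 t2 q1 q2 p1 p2 u - Bfun t1 t2 q1 q2 p1 p2 v) / (u - v)) /\
  (forall u v : R,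
     pb (fun a b c d => Afun a b c d u) (fun a b c d => Afun a b c d v)
        q1 q2 p1 p2 = 0) /\
  (0 < discB t1 t2 q1 q2 p1 p2 ->
     pb (rootU1 t1 t2) (canV1 t1 t2) q1 q2 p1 p2 = 1 /\
     pb (rootU1 t1 t2) (canV2 t1 t2) q1 q2 p1 p2 = 0 /\
     pb (rootU2 t1 t2) (canV1 t1 t2) q1 q2 p1 p2 = 0 /\
     pb (rootU2 t1 t2) (canV2 t1 t2) q1 q2 p1 p2 = 1 /\
     pb (rootU1 t1 t2) (rootU2 t1 t2) q1 q2 p1 p2 = 0 /\
     pb (canV1 t1 t2) (canV2 t1 t2) q1 q2 p1 p2 = 0).
Proof.
  split; [|split].
  - intros u v huv. unfold pb, d_q1, d_q2, d_p1, d_p2, Bfun, Afun.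
    dsolve. assert (u - v <> 0) by lra. field; auto.
  - intros u v. unfold pb, d_q1, d_q2, d_p1, d_p2, Afun.
    dsolve. ring.
  - intros hD. exact (part3 t1 t2 q1 q2 p1 p2 hq1 hD).
Qed.
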